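(* For every formula $A$ of $\mathbf{L_1}$, if not $\vdash_H A$, then $\dashv_H A$. That is, every formula satisfies $\vdash_H A$ or $\dashv_H A$.
   Context: Formulas of $\mathbf{L_1}$: built from atomic formulas $\epsilon ab$ ($a,b$ name variables, possibly equal) with primitive connectives $\vee,\sim$; $\wedge,\supset,\equiv$ defined as usual. Disjunctions may be associated in any way. $\vdash_H A$: $A$ belongs to the smallest set containing all instances of classical propositional tautologies and all formulas $\epsilon ab\supset\epsilon aa$, $(\epsilon ab\wedge\epsilon bc)\supset\epsilon ac$, $(\epsilon ab\wedge\epsilon bb)\supset\epsilon ba$, closed under modus ponens. Positive/negative parts (occurrences): $A$ is a positive part of $A$; if $B\vee C$ is a positive part then $B,C$ are positive parts; if $\sim B$ is a positive part then $B$ is a negative part; if $\sim B$ is a negative part then $B$ is a positive part. $F[B_+,B_-]$ denotes a formula in which some formula $B$ has one occurrence as positive part and another non-overlapping occurrence as negative part. Hintikka formula: a formula $H$ such that (1) $H$ is not of the form $F[B_+,B_-]$; (2) if $B\vee C$ is a negative part of $H$ then $B$ or $C$ is; (3) if $\epsilon ab$ is a negative part then so is $\epsilon aa$; (4) if $\epsilon ab,\epsilon bc$ are negative parts then so is $\epsilon ac$; (5) if $\epsilon ab,\epsilon bb$ are negative parts then so is $\epsilon ba$. $\mathbf{HAR}$: fix a name variable $a_0$; $\dashv_H$ is the smallest set such that $\dashv_H\epsilon a_0a_0$; $\dashv_H\sim\epsilon a_0a_0$; if $\vdash_H A\supset B$ and $\dashv_H B$ then $\dashv_H A$; if $\dashv_H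 A$ and $A$ is obtained from $B$ by uniform substitution of name variables for name variables then $\dashv_H B$; if $A$ is a Hintikka formula that is a disjunction of atomic or negated atomic formulas, $\dashv_H A$, and $\epsilon ab$ is not a negative part of $A$, then $\dashv_H A\vee\epsilon ab$. *)

(* Defs.v *)
From Stdlib Require Import List.
Import ListNotations.

Definition name := nat.

Inductive form : Type :=
| Eps : name -> name -> form
| Or  : form -> form -> form
| Not : form -> form.

Definition And (A B : form) : form := Not (Or (Not A) (Not B)).
Definition Imp (A B : form) : form := Or (Not A) B.
Definition Equiv (A B : form) : form := And (Imp A B) (Imp B A).

Inductive pform : Type :=
| PVar : nat -> pform
| POr  : pform -> pform -> pform
| PNot : pform -> pform.

Fixpoint peval (v : nat -> bool) (P : pform) : bool :=
  match P with
  | PVar n => v n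
  | POr P Q => orb (peval v P) (peval v Q)
  | PNot P => negb (peval v P)
  end.

Definition tautology (P : pform) : Prop := forall v, peval v P = true.

Fixpoint psubst (s : nat -> form) (P : pform) : form :=
  match P with
  | PVar n => s n
  | POr P Q => Or (psubst s P) (psubst s Q)
  | PNot P => Not (psubst s P)
  end.

Definition taut_instance (A : form) : Prop :=
  exists (P : pform) (s : nat -> form), tautology P /\ A = psubst s P.

Inductive provable : form -> Prop :=
| pr_taut : forall A, taut_instance A -> provable A
| pr_ax1 : forall a b, provable (Imp (Eps a b) (Eps a a))
| pr_ax2 : forall a b c, provable (Imp (And (Eps a b) (Eps b c)) (Eps a c))
| pr_ax3 : forall a b, provable (Imp (And (Eps a b) (Eps b b)) (Eps b a))
| pr_mp : forall A B, provable (Imp A B) -> provable A -> provable B.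

(* Occurrences are addressed by paths from the root. *)
Inductive dir : Type := DL | DR | DN.
Definition path := list dir.

(* part A p B pol : the occurrence of B at path p is a positive part of A
   (pol = true) or a negative part of A (pol = false), following the
   paper's inductive definition literally. *)
Inductive part (A : form) : path -> form -> bool -> Prop :=
| part_self : part A [] A true
| part_orl : forall p B C, part A p (Or B C) true -> part A (p ++ [DL]) B true
| part_orr : forall p B C, part A p (Or B C) true -> part A (p ++ [DR]) C true
| part_not : forall p B s, part A p (Not B) s -> part A (p ++ [DN]) B (negb s).

Definition pos_part (A : form) (p : path) (B : form) := part A p B true.
Definition neg_part (A : form) (p : path) (B : form) := part A p B false.

Definition is_neg_part (A B : form) : Prop := exists p, neg_part A p B.

Definition non_overlapping (p q : path) : Prop :=
  (~ exists r, q = p ++ r) /\ (~ exists r, p = q ++ r).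

(* A is of the form F[B_+, B_-]. *)
Definition has_pos_neg (A : form) : Prop :=
  exists B p q, pos_part A p B /\ neg_part A q B /\ non_overlapping p q.

Definition hintikka (H : form) : Prop :=
  ~ has_pos_neg H /\
  (forall B C, is_neg_part H (Or B C) -> is_neg_part H B \/ is_neg_part H C) /\
  (forall a b, is_neg_part H (Eps a b) -> is_neg_part H (Eps a a)) /\
  (forall a b c, is_neg_part H (Eps a b) -> is_neg_part H (Eps b c) ->
                 is_neg_part H (Eps a c)) /\
  (forall a b, is_neg_part H (Eps a b) -> is_neg_part H (Eps b b) ->
               is_neg_part H (Eps b a)).

Inductive lit_disj : form -> Prop :=
| ld_atom : forall a b, lit_disj (Eps a b)
| ld_natom : forall a b, lit_disj (Not (Eps a b))
| ld_or : forall A B, lit_disj A -> lit_disj B -> lit_disj (Or A B).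

Fixpoint nsubst (s : name -> name) (A : form) : form :=
  match A with
  | Eps a b => Eps (s a) (s b)
  | Or A B => Or (nsubst s A) (nsubst s B)
  | Not A => Not (nsubst s A)
  end.

Inductive rejected (a0 : name) : form -> Prop :=
| rj_aa : rejected a0 (Eps a0 a0)
| rj_naa : rejected a0 (Not (Eps a0 a0))
| rj_mp : forall A B, provable (Imp A B) -> rejected a0 B -> rejected a0 A
| rj_subst : forall (s : name -> name) B,
    rejected a0 (nsubst s B) -> rejected a0 B
| rj_ext : forall A a b,
    hintikka A -> lit_disj A -> rejected a0 A -> ~ is_neg_part A (Eps a b) ->
    rejected a0 (Or A (Eps a b)).

(* Main.v *)
Require Import Defs.
From Stdlib Require Import List Bool Classical Arith Cantor.
Import ListNotations.

Fixpoint ev (w : name -> name -> bool) (A : form) : bool :=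
  match A with
  | Eps a b => w a b
  | Or A B => ev w A || ev w B
  | Not A => negb (ev w A)
  end.

Fixpoint enc (A : form) : pform :=
  match A with
  | Eps a b => PVar (Cantor.to_nat (a,b))
  | Or A B => POr (enc A) (enc B)
  | Not A => PNot (enc A)
  end.

Definition dec (n : nat) : form := let '(a,b) := Cantor.of_nat n in Eps a b.

Lemma psubst_enc A : psubst dec (enc A) = A.
Proof. induction A; try (simpl; congruence).
 change (dec (Cantor.to_nat (n,n0)) = Eps n n0). unfold dec. rewrite Cantor.cancel_of_to. reflexivity. Qed.

Lemma peval_enc v A : peval v (enc A) = ev (fun a b => v (Cantor.to_nat (a,b))) A.
Proof. induction A; cbn [peval enc ev nsubst]; congruence. Qed.

Lemma taut_prov A : (forall w, ev w A = true) -> provable A.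
Proof. intros H. apply pr_taut. exists (enc A), dec. split.
 - intro v. rewrite peval_enc. apply H.
 - symmetry. apply psubst_enc. Qed.

Fixpoint names (A : form) : list name :=
  match A with Eps a b => [a;b] | Or A B => names A ++ names B | Not A => names A end.

Lemma ev_agree A : forall (L : list name) w w', incl (names A) L ->
  (forall a b, In a L -> In b L -> w a b = w' a b) -> ev w A = ev w' A.
Proof. induction A; simpl; intros L w w' Hi Hw.
 - apply Hw; apply Hi; simpl; auto.
 - rewrite (IHA1 L w w'), (IHA2 L w w'); auto; intros x Hx; apply Hi; apply in_or_app; auto.
 - rewrite (IHA L w w'); auto.
Qed.

Lemma ev_nsubst w s A : ev w (nsubst s A) = ev (fun a b => w (s a) (s b)) A.
Proof. induction A; cbn [peval enc ev nsubst]; congruence. Qed.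

Definition adm (V : name -> name -> bool) : Prop :=
  (forall a b, V a b = true -> V a a = true) /\
  (forall a b c, V a b = true -> V b c = true -> V a c = true) /\
  (forall a b, V a b = true -> V b b = true -> V b a = true).

Fixpoint chain (l : list form) (A : form) : form :=
  match l with [] => A | F :: l => Imp F (chain l A) end.

Lemma chain_prov l A : (forall F, In F l -> provable F) -> provable (chain l A) -> provable A.
Proof. induction l; simpl; intros H1 H2; auto.
 apply IHl. intros; auto. apply (pr_mp a); auto. Qed.

Lemma chain_ev w l A : ((forall F, In F l -> ev w F = true) -> ev w A = true) -> ev w (chain l A) = true.
Proof. induction l; simpl; intros H. apply H; intros F [].
 destruct (ev w a) eqn:E; simpl; auto. apply IHl. intros H'. apply H. intros F [<-|HF]; auto. Qed.

Definition ax (L : list name) : list form :=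
  map (fun p => Imp (Eps (fst p) (snd p)) (Eps (fst p) (fst p))) (list_prod L L) ++
  map (fun t => Imp (And (Eps (fst (fst t)) (snd (fst t))) (Eps (snd (fst t)) (snd t))) (Eps (fst (fst t)) (snd t))) (list_prod (list_prod L L) L) ++
  map (fun p => Imp (And (Eps (fst p) (snd p)) (Eps (snd p) (snd p))) (Eps (snd p) (fst p))) (list_prod L L).

Lemma ax_prov L F : In F (ax L) -> provable F.
Proof. unfold ax. intros H. repeat rewrite in_app_iff in H.
 destruct H as [H|[H|H]]; apply in_map_iff in H; destruct H as [x [<- _]];
 first [apply pr_ax1|apply pr_ax2|apply pr_ax3]. Qed.

Definition inL (L : list name) (a : name) : bool := existsb (Nat.eqb a) L.
Lemma inL_spec L a : inL L a = true <-> In a L.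
Proof. unfold inL. rewrite existsb_exists. split.
 - intros [x [Hx E]]. apply Nat.eqb_eq in E. subst; auto.
 - intros H. exists a. split; auto. apply Nat.eqb_refl. Qed.

Lemma completeness A : (forall V, adm V -> ev V A = true) -> provable A.
Proof.
 intros H. set (L := names A).
 apply (chain_prov (ax L) A). apply ax_prov.
 apply taut_prov. intro w. apply chain_ev. intros Hax.
 set (V := fun a b => w a b && inL L a && inL L b).
 assert (HVe : forall x y, V x y = true -> w x y = true /\ In x L /\ In y L).
 { intros x y E. unfold V in E. apply andb_prop in E as [E E3]. apply andb_prop in E as [E1 E2].
   apply inL_spec in E2, E3. auto. }
 assert (HVi : forall x y, w x y = true -> In x L -> In y L -> V x y = true).
 { intros x y E1 E2 E3. unfold V. apply inL_spec in E2, E3. rewrite E1, E2, E3. reflexivity. }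
 assert (HV : adm V).
 { split; [|split].
 - intros a b E. destruct (HVe a b E) as (E1&Ha&Hb). apply HVi; auto.
   assert (Hi := Hax (Imp (Eps a b) (Eps a a))). unfold Imp in Hi; simpl in Hi.
   rewrite E1 in Hi. apply Hi.
   unfold ax. apply in_or_app. left. apply in_map_iff. exists (a,b). split; auto. apply in_prod; auto.
 - intros a b c E E'. destruct (HVe a b E) as (E1&Ha&Hb). destruct (HVe b c E') as (E2&_&Hc).
   apply HVi; auto.
   assert (Hi := Hax (Imp (And (Eps a b) (Eps b c)) (Eps a c))). unfold Imp, And in Hi; simpl in Hi.
   rewrite E1, E2 in Hi. apply Hi.
   unfold ax. apply in_or_app. right. apply in_or_app. left. apply in_map_iff.
   exists ((a,b),c). split; auto. apply in_prod; auto. apply in_prod; auto.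
 - intros a b E E'. destruct (HVe a b E) as (E1&Ha&Hb). destruct (HVe b b E') as (E2&_&_).
   apply HVi; auto.
   assert (Hi := Hax (Imp (And (Eps a b) (Eps b b)) (Eps b a))). unfold Imp, And in Hi; simpl in Hi.
   rewrite E1, E2 in Hi. apply Hi.
   unfold ax. apply in_or_app. right. apply in_or_app. right. apply in_map_iff.
   exists (a,b). split; auto. apply in_prod; auto. }
 rewrite (ev_agree A L w V); [apply H; exact HV | apply incl_refl |].
 intros a b Ha Hb. unfold V. apply inL_spec in Ha, Hb. rewrite Ha, Hb.
 now rewrite !andb_true_r.
Qed.
Inductive spine : form -> form -> Prop :=
| sp_refl : forall X, spine X X
| sp_l : forall X Y Z, spine X Z -> spine (Or X Y) Z
| sp_r : forall X Y Z, spine Y Z -> spine (Or X Y) Z.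

Lemma spine_trans X Y Z : spine X Y -> spine Y Z -> spine X Z.
Proof. induction 1; intros; auto. apply sp_l; auto. apply sp_r; auto. Qed.

Lemma lit_disj_spine X Y : spine X Y -> lit_disj X -> lit_disj Y.
Proof. induction 1; intros HX; auto; inversion HX; auto. Qed.

Lemma part_inv X p B pol : part X p B pol -> lit_disj X ->
  (pol = true /\ spine X B) \/ (pol = false /\ exists a b, B = Eps a b /\ spine X (Not (Eps a b))).
Proof.
 induction 1; intros HX.
 - left; split; auto; apply sp_refl.
 - destruct (IHpart HX) as [[_ H1]|[E _]]; [|discriminate]. left; split; auto.
   eapply spine_trans; [exact H1|]. apply sp_l, sp_refl.
 - destruct (IHpart HX) as [[_ H1]|[E _]]; [|discriminate]. left; split; auto.
   eapply spine_trans; [exact H1|]. apply sp_r, sp_refl.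
 - destruct (IHpart HX) as [[-> H1]|[-> (a&b&E&_)]]; [|discriminate].
   right; split; [reflexivity|]. assert (Hl := lit_disj_spine _ _ H1 HX).
   inversion Hl; subst. exists a, b; auto.
Qed.

Lemma spine_part X p Y Z : part X p Y true -> spine Y Z -> exists q, part X q Z true.
Proof. intros H Hs. revert p H. induction Hs; intros p H.
 - eauto.
 - apply (IHHs (p ++ [DL])). eapply part_orl; eauto.
 - apply (IHHs (p ++ [DR])). eapply part_orr; eauto.
Qed.

Lemma spine_neg X a b : spine X (Not (Eps a b)) -> is_neg_part X (Eps a b).
Proof. intros H. destruct (spine_part X [] X _ (part_self X) H) as [q Hq].
 exists (q ++ [DN]). exact (part_not X q (Eps a b) true Hq). Qed.

Lemma negpart_spine X B : lit_disj X -> is_neg_part X B ->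
  exists a b, B = Eps a b /\ spine X (Not (Eps a b)).
Proof. intros HX [p Hp]. destruct (part_inv _ _ _ _ Hp HX) as [[E _]|[_ H]]; [discriminate|exact H]. Qed.

Lemma hint X (N : name -> name -> Prop) : lit_disj X ->
  (forall a b, spine X (Not (Eps a b)) <-> N a b) ->
  (forall a b, N a b -> N a a) ->
  (forall a b c, N a b -> N b c -> N a c) ->
  (forall a b, N a b -> N b b -> N b a) ->
  (forall a b, spine X (Eps a b) -> ~ N a b) -> hintikka X.
Proof.
 intros HX HN H1 H2 H3 Hd.
 assert (E : forall a b, is_neg_part X (Eps a b) <-> N a b).
 { intros a b; split.
   - intros Hn. destruct (negpart_spine X _ HX Hn) as (a'&b'&Ee&Hs). injection Ee as -> ->. apply HN; auto.
   - intros Hn. apply spine_neg. apply HN; auto. }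
 split; [|split; [|split; [|split]]].
 - intros (B&p&q&Hp&Hq&_). destruct (negpart_spine X B HX (ex_intro _ q Hq)) as (a&b&->&Hs).
   destruct (part_inv _ _ _ _ Hp HX) as [[_ Hs']|[E' _]]; [|discriminate].
   apply (Hd a b Hs'). apply HN; auto.
 - intros B C Hn. destruct (negpart_spine X _ HX Hn) as (a&b&Ee&_). discriminate.
 - intros a b Hn. apply E. apply E in Hn. eauto.
 - intros a b c Hn Hn'. apply E. apply E in Hn, Hn'. eauto.
 - intros a b Hn Hn'. apply E. apply E in Hn, Hn'. eauto.
Qed.

Fixpoint buildP (X : form) (l : list (name*name)) : form :=
  match l with [] => X | (a,b) :: l => buildP (Or X (Eps a b)) l end.
Fixpoint buildN (X : form) (l : list (name*name)) : form :=
  match l with [] => X | (a,b) :: l => buildN (Or X (Not (Eps a b))) l end.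

Lemma buildN_lit l : forall X, lit_disj X -> lit_disj (buildN X l).
Proof. induction l as [|[a b] l IH]; simpl; intros X H; auto. apply IH. constructor; auto. constructor. Qed.

Lemma buildN_neg l : forall X a b, spine (buildN X l) (Not (Eps a b)) <->
  spine X (Not (Eps a b)) \/ In (a,b) l.
Proof. induction l as [|[c d] l IH]; simpl; intros X a b.
 - tauto.
 - rewrite IH. split.
   + intros [H|H]; auto. inversion H; subst; auto. inversion H3; subst; auto.
   + intros [H|[H|H]]; auto. left; apply sp_l; auto. injection H as -> ->. left. apply sp_r, sp_refl.
Qed.

Lemma buildN_pos l : forall X a b, spine (buildN X l) (Eps a b) -> spine X (Eps a b).
Proof. induction l as [|[c d] l IH]; simpl; intros X a b H; auto.
 apply IH in H. inversion H; subst; auto. inversion H3. Qed.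

Lemma buildN_ev w l : forall X, ev w (buildN X l) = false ->
  ev w X = false /\ (forall a b, In (a,b) l -> w a b = true).
Proof. induction l as [|[c d] l IH]; simpl; intros X H.
 - split; auto; intros _ _ [].
 - apply IH in H as [H1 H2]. apply orb_false_elim in H1 as [H1 H3].
   apply negb_false_iff in H3. split; auto. intros a b [E|E]; auto. injection E as -> ->; auto.
Qed.

Lemma buildN_ev_false w l : forall X, ev w X = false -> (forall a b, In (a,b) l -> w a b = true) ->
  ev w (buildN X l) = false.
Proof. induction l as [|[c d] l IH]; simpl; intros X H1 H2; auto.
 apply IH. simpl. rewrite H1, (H2 c d); auto. intros; auto. Qed.

Lemma buildP_ev w l : forall X, ev w (buildP X l) = false ->
  ev w X = false /\ (forall a b, In (a,b) l -> w a b = false).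
Proof. induction l as [|[c d] l IH]; simpl; intros X H.
 - split; auto; intros _ _ [].
 - apply IH in H as [H1 H2]. apply orb_false_elim in H1 as [H1 H3].
   split; auto. intros a b [E|E]; auto. injection E as -> ->; auto.
Qed.

Lemma rej_buildP a0 (N : name -> name -> Prop) l : forall X, rejected a0 X -> lit_disj X ->
  (forall a b, spine X (Not (Eps a b)) <-> N a b) ->
  (forall a b, N a b -> N a a) ->
  (forall a b c, N a b -> N b c -> N a c) ->
  (forall a b, N a b -> N b b -> N b a) ->
  (forall a b, spine X (Eps a b) -> ~ N a b) ->
  (forall a b, In (a,b) l -> ~ N a b) ->
  rejected a0 (buildP X l).
Proof.
 induction l as [|[a b] l IH]; simpl; intros X HR HL HN H1 H2 H3 Hd Hl; auto.
 assert (HN' : forall c d, spine (Or X (Eps a b)) (Not (Eps c d)) <-> N c d).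
 { intros c d. rewrite <- HN. split; intros H.
   - inversion H; subst; auto. inversion H6.
   - apply sp_l; auto. }
 apply IH; auto.
 - apply rj_ext; auto.
   + apply (hint X N); auto.
   + intro Hn. apply (Hl a b); [left; auto|]. destruct (negpart_spine X _ HL Hn) as (a'&b'&Ee&Hs).
     injection Ee as -> ->. apply HN; auto.
 - constructor; auto. constructor.
 - intros c d H. inversion H; subst; eauto. inversion H6; subst. apply Hl; auto.
Qed.

Lemma filt_spec (f : name -> name -> bool) L a b :
  In (a,b) (filter (fun p => f (fst p) (snd p)) (list_prod L L)) <-> In a L /\ In b L /\ f a b = true.
Proof. rewrite filter_In, in_prod_iff. simpl. tauto. Qed.

Lemma case2 a0 A V L a1 b1 rest poss :
 adm V -> ev V A = false -> incl (names A) L ->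
 (forall a b, In (a,b) ((a1,b1)::rest) <-> In a L /\ In b L /\ V a b = true) ->
 (forall a b, In (a,b) poss <-> In a L /\ In b L /\ V a b = false) ->
 rejected a0 A.
Proof.
 intros [HV1 [HV2 HV3]] HA Hincl Hneg Hpos.
 set (N := fun a b => In a L /\ In b L /\ V a b = true).
 set (D := buildN (Not (Eps a1 b1)) rest).
 assert (HLD : lit_disj D) by (apply buildN_lit; constructor).
 assert (HND : forall a b, spine D (Not (Eps a b)) <-> N a b).
 { intros a b. unfold D. rewrite buildN_neg. unfold N. rewrite <- Hneg. simpl. split.
   - intros [H|H]; auto. inversion H; subst; auto.
   - intros [H|H]; auto. injection H as -> ->. left; apply sp_refl. }
 assert (HrD : rejected a0 D).
 { apply (rj_subst a0 (fun _ => a0)). apply (rj_mp a0 _ (Not (Eps a0 a0))); [|apply rj_naa].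
   apply taut_prov. intro w. unfold Imp. cbn [ev]. rewrite ev_nsubst.
   destruct (w a0 a0) eqn:E; [|apply orb_true_r].
   unfold D. rewrite buildN_ev_false; auto; simpl; rewrite E; auto. }
 apply (rj_mp a0 A (buildP D poss)).
 - apply taut_prov. intro w. unfold Imp. cbn [ev].
   destruct (ev w (buildP D poss)) eqn:EH; [apply orb_true_r|].
   apply buildP_ev in EH as [ED Hp]. unfold D in ED. apply buildN_ev in ED as [E1 Hr].
   simpl in E1. apply negb_false_iff in E1.
   rewrite (ev_agree A L w V Hincl); [rewrite HA; reflexivity|].
   intros a b Ha Hb. destruct (V a b) eqn:Eab.
   + assert (Hi : In (a,b) ((a1,b1)::rest)) by (apply Hneg; auto).
     destruct Hi as [Hi|Hi]; auto. injection Hi as -> ->; auto.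
   + apply Hp. apply Hpos; auto.
 - apply (rej_buildP a0 N); auto.
   + intros a b (Ha&Hb&E). unfold N; repeat split; eauto.
   + intros a b c (Ha&Hb&E) (_&Hc&E'). unfold N; repeat split; eauto.
   + intros a b (Ha&Hb&E) (_&_&E'). unfold N; repeat split; eauto.
   + intros a b H. apply buildN_pos in H. inversion H.
   + intros a b H (_&_&E). apply Hpos in H as (_&_&E'). congruence.
Qed.

Theorem theorem3p2 : forall (a0 : name) (A : form),
  ~ provable A -> rejected a0 A.
Proof.
 intros a0 A HnA.
 assert (HV : exists V, adm V /\ ev V A = false).
 { apply NNPP. intro Hn. apply HnA. apply completeness. intros V HV.
   destruct (ev V A) eqn:E; auto. exfalso. apply Hn. eauto. }
 destruct HV as [V [HV HA]].
 pose proof (filt_spec V (names A)) as Hneg.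
 pose proof (filt_spec (fun x y => negb (V x y)) (names A)) as Hpos. simpl in Hpos.
 destruct (filter (fun p => V (fst p) (snd p)) (list_prod (names A) (names A)))
   as [|[a1 b1] rest] eqn:En.
 - apply (rj_subst a0 (fun _ => a0)). apply (rj_mp a0 _ (Eps a0 a0)); [|apply rj_aa].
   apply taut_prov. intro w. unfold Imp. cbn [ev]. rewrite ev_nsubst.
   destruct (w a0 a0) eqn:E; [apply orb_true_r|].
   rewrite (ev_agree A (names A) _ V); [rewrite HA; reflexivity | apply incl_refl |].
   intros a b Ha Hb. cbn beta. destruct (V a b) eqn:Eab; auto.
   exfalso. apply (proj2 (Hneg a b)); auto.
 - apply (case2 a0 A V (names A) a1 b1 rest
     (filter (fun p => negb (V (fst p) (snd p))) (list_prod (names A) (names A)))); auto.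
   + apply incl_refl.
   + intros a b. rewrite Hpos. rewrite negb_true_iff. tauto.
Qed.
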